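(* Let $G$ be a clique tree with blocks $B_1,\dots,B_b$, each block having at least $3$ vertices. Then $$Z(G)=\sum_{i=1}^{b} Z(B_i)-\sum_{v\in V(G)}\bigl(bi_G(v)-1\bigr).$$
   Context: A block of a connected graph is a maximal connected subgraph without a cut vertex of its own; a clique tree is a connected graph each of whose blocks is a complete graph. For a vertex $v$, the block index $bi_G(v)$ is the number of blocks of $G$ containing $v$. $Z(\cdot)$ denotes the zero forcing number: with each vertex coloured blue or white, the colour-change rule makes the unique white neighbour of a blue vertex blue (if it has exactly one white neighbour); $Z(G)$ is the minimum size of an initially blue set from which repeated application of the rule turns all vertices blue. For a complete graph, $Z(K_m)=m-1$. *)

(* Defs.v *)
(* Simple graph: e : rel T on a finType T (symmetric, irreflexive). *)
From mathcomp Require Import all_boot all_order all_algebra.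
Set Implicit Arguments. Unset Strict Implicit. Unset Printing Implicit Defensive.

Section Graphs.
Variables (T : finType) (e : rel T).

Definition induced_rel (U : {set T}) : rel T :=
  [rel x y | [&& e x y, x \in U & y \in U]].

(* G[U] is connected (the empty graph counts as connected) *)
Definition connectedb (U : {set T}) : bool :=
  [forall x in U, forall y in U, connect (induced_rel U) x y].

Definition nonsep (U : {set T}) : bool :=
  connectedb U && [forall v in U, connectedb (U :\ v)].

Definition is_block (B : {set T}) : bool :=
  [&& B != set0, nonsep B & [forall C : {set T}, (B \proper C) ==> ~~ nonsep C]].

Definition blocks : {set {set T}} := [set B | is_block B].

Definition block_index (v : T) : nat := #|[set B in blocks | v \in B]|.

Definition is_clique (B : {set T}) : bool :=
  [forall x in B, forall y in B, (x != y) ==> e x y].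

Definition clique_tree : Prop :=
  connectedb setT /\ (forall B, B \in blocks -> is_clique B).

(* Zero forcing in G[U]: one (simultaneous) application of the colour-change
   rule to the blue set X: every blue u in X with exactly one white neighbour
   w in G[U] turns w blue. *)
Definition force_step (U X : {set T}) : {set T} :=
  X :|: [set w in U | [exists u in X,
           [set y in U | e u y & y \notin X] == [set w]]].

(* final blue set (derived set) obtained from X: iterate until stable *)
Definition closure (U X : {set T}) : {set T} := iter #|T| (force_step U) X.

Definition zero_forcing_set (U S : {set T}) : bool :=
  (S \subset U) && (U \subset closure U S).

Definition Zf (U : {set T}) : nat :=
  \big[minn/#|U|]_(S : {set T} | zero_forcing_set U S) #|S|.

End Graphs.

(* Main.v *)
Require Import Defs.
From mathcomp Require Import all_boot all_order all_algebra.
From mathcomp Require Import zify.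
Import GRing.Theory Num.Theory.
Set Implicit Arguments. Unset Strict Implicit. Unset Printing Implicit Defensive.

Module Aux.
Local Open Scope nat_scope.

Section S.
Variables (T : finType) (e : rel T).
Hypothesis esym : symmetric e.
Hypothesis eirr : irreflexive e.

Local Notation ir := (induced_rel e).

Lemma ir_sym (U : {set T}) : symmetric (ir U).
Proof. by move=> x y; rewrite /induced_rel /= esym; case: (x \in U); case: (y \in U); rewrite ?andbF. Qed.

Lemma ir_connect_sym (U : {set T}) x y : connect (ir U) x y = connect (ir U) y x.
Proof. by rewrite (sym_connect_sym (@ir_sym U)). Qed.

Lemma ctrans (U : {set T}) x y z : connect (ir U) x y -> connect (ir U) y z -> connect (ir U) x z.
Proof. exact: connect_trans. Qed.

Lemma ir_mono (U V : {set T}) x y : U \subset V -> connect (ir U) x y -> connect (ir V) x y.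
Proof.
move=> sUV; apply: connect_sub => a b /and3P[eab aU bU]; apply: connect1.
by rewrite /induced_rel /= eab (subsetP sUV _ aU) (subsetP sUV _ bU).
Qed.

Lemma ir_edge (U : {set T}) x y : e x y -> x \in U -> y \in U -> connect (ir U) x y.
Proof. by move=> exy xU yU; apply: connect1; rewrite /induced_rel /= exy xU yU. Qed.

Lemma hub_connected (U : {set T}) h : (forall x, x \in U -> connect (ir U) x h) -> connectedb e U.
Proof.
move=> H; apply/forallP=> x; apply/implyP=> xU; apply/forallP=> y; apply/implyP=> yU.
apply: connect_trans (H x xU) _; rewrite ir_connect_sym; exact: H.
Qed.

Lemma connectedP (U : {set T}) x y : connectedb e U -> x \in U -> y \in U -> connect (ir U) x y.
Proof. by move=> /forallP/(_ x)/implyP/(_ _)/forallP/(_ y)/implyP H xU yU; apply: H. Qed.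

Lemma path_conn (A : {set T}) a s : path e a s -> all (mem A) (a :: s) ->
  forall z, z \in a :: s -> connect (ir A) a z.
Proof.
elim: s a => [|b s IH] a /=.
  by move=> _ _ z; rewrite inE => /eqP->.
move=> /andP[eab pb] /and3P[aA bA Hs] z; rewrite inE => /orP[/eqP->//|zs].
apply: connect_trans (ir_edge eab aA bA) _; apply: IH => //=; by rewrite bA.
Qed.

Lemma path_conn_last (A : {set T}) a s : path e a s -> all (mem A) (a :: s) ->
  forall z, z \in a :: s -> connect (ir A) z (last a s).
Proof.
move=> p al z zs; apply: (ctrans (y:=a)).
  rewrite ir_connect_sym; exact: (path_conn p al zs).
exact: (path_conn p al (mem_last a s)).
Qed.


Lemma extend_block (W : {set T}) : nonsep e W -> W != set0 ->
  exists2 B, B \in blocks e & W \subset B.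
Proof.
move=> nW W0.
have P0 : nonsep e W && (W \subset W) by rewrite nW subxx.
case: (@arg_maxnP _ W (fun C : {set T} => nonsep e C && (W \subset C)) (fun C : {set T} => #|C|) P0) => B /andP[nB sWB] Bmax.
exists B => //; rewrite inE /is_block nB /=; apply/andP; split.
  apply: contraNneq W0 => B0; apply/eqP; apply/setP=> x; rewrite inE.
  by apply/negP => xW; move: (subsetP sWB _ xW); rewrite B0 inE.
apply/forallP=> C; apply/implyP=> pBC; apply/negP=> nC.
have := Bmax C; rewrite nC (subset_trans sWB (proper_sub pBC)) => /(_ isT).
by move=> /=; rewrite leqNgt (proper_card pBC).
Qed.

Lemma nonsep_union (A C : {set T}) x y : nonsep e A -> nonsep e C -> x != y ->
  x \in A -> y \in A -> x \in C -> y \in C -> nonsep e (A :|: C).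
Proof.
move=> /andP[cA /forallP rA] /andP[cC /forallP rC] xy xA yA xC yC.
apply/andP; split.
  apply: (@hub_connected _ x) => z; rewrite inE => /orP[zA|zC].
    by apply: ir_mono (subsetUl A C) (connectedP cA zA xA).
  by apply: ir_mono (subsetUr A C) (connectedP cC zC xC).
apply/forallP=> v; apply/implyP=> _.
have [h /and3P[hv hA' hC']] : exists h, [&& h != v, h \in A & h \in C].
  by case: (eqVneq v x) => [->|vx]; [exists y | exists x]; rewrite ?xA ?xC ?yA ?yC ?andbT 1?eq_sym.
have hA : h \in A :\ v by rewrite !inE hv.
have hC : h \in C :\ v by rewrite !inE hv.
have sA : A :\ v \subset (A :|: C) :\ v by apply: setSD; apply: subsetUl.
have sC : C :\ v \subset (A :|: C) :\ v by apply: setSD; apply: subsetUr.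
apply: (@hub_connected _ h) => z; rewrite !inE => /andP[zv /orP[zA|zC]].
  have := rA v; case: (boolP (v \in A)) => vA /= H.
    by apply: ir_mono sA (connectedP H _ hA); rewrite !inE zv.
  apply: ir_mono (_ : A \subset _) (connectedP cA zA _).
    by apply/subsetP=> t tA; rewrite !inE tA orTb andbT; apply: contraNneq vA => <-.
  by move: hA; rewrite !inE => /andP[].
have := rC v; case: (boolP (v \in C)) => vC /= H.
  by apply: ir_mono sC (connectedP H _ hC); rewrite !inE zv.
apply: ir_mono (_ : C \subset _) (connectedP cC zC _).
  by apply/subsetP=> t tC; rewrite !inE tC orbT andbT; apply: contraNneq vC => <-.
by move: hC; rewrite !inE => /andP[].
Qed.

Lemma block_inter B1 B2 x y : B1 \in blocks e -> B2 \in blocks e -> x != y ->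
  x \in B1 -> y \in B1 -> x \in B2 -> y \in B2 -> B1 = B2.
Proof.
rewrite !inE => /and3P[_ n1 /forallP m1] /and3P[_ n2 /forallP m2] xy x1 y1 x2 y2.
have nU := nonsep_union n1 n2 xy x1 y1 x2 y2.
have s21 : B2 \subset B1.
  have := m1 (B1 :|: B2); rewrite nU properE subsetUl /= implybF negbK.
  by rewrite subUset => /andP[].
have s12 : B1 \subset B2.
  have := m2 (B1 :|: B2); rewrite nU properE subsetUr /= implybF negbK.
  by rewrite subUset => /andP[].
by apply/eqP; rewrite eqEsubset s12 s21.
Qed.

Lemma hub_path (A : {set T}) v a s : path e a s -> all (mem A) (a :: s) -> v \in A ->
  (e a v \/ e (last a s) v) -> forall z, z \in a :: s -> connect (ir A) z v.
Proof.
move=> p al vA [eav|elv] z zs.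
  apply: (ctrans (y:=a)); first by rewrite ir_connect_sym; exact: (path_conn p al zs).
  by apply: ir_edge => //; move: al => /= /andP[].
apply: (ctrans (y:=last a s)); first exact: (path_conn_last p al zs).
apply: ir_edge => //; exact: (allP al _ (mem_last a s)).
Qed.

Lemma path_ir_all (A : {set T}) a s : path (ir A) a s -> s != [::] -> all (mem A) (a :: s).
Proof.
elim: s a => [//|b s IH] a /= /andP[/and3P[_ aA bA] ps] _.
rewrite aA /=; case: s IH ps => [|c s] IH ps; first by rewrite /= bA.
by have := IH b ps isT.
Qed.

Lemma split_ex (s : seq T) x : x \in s -> exists s1 s2, s = s1 ++ x :: s2.
Proof. by case/splitPr=> s1 s2; exists s1, s2. Qed.

Lemma cyc v x y : e v x -> e v y -> x != y -> connect (ir (~: [set v])) x y ->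
  exists2 B, B \in blocks e & [&& v \in B, x \in B & y \in B].
Proof.
move=> evx evy xy /connectP[p pp yE].
case: (shortenP pp) yE => q pq uq _ {p pp} yE.
have qn : q != [::] by apply: contraNneq xy => q0; rewrite yE q0.
have alA := path_ir_all pq qn.
have pe : path e x q by apply: sub_path pq => a b /and3P[].
have nv : forall z, z \in x :: q -> z != v.
  by move=> z /(allP alA); rewrite !inE.
set W := v |: [set z in x :: q].
have vW : v \in W by rewrite !inE eqxx.
have qW : forall z, z \in x :: q -> z \in W by move=> z zq; rewrite in_setU in_set zq orbT.
have Wcase : forall z, z \in W -> z = v \/ z \in x :: q.
  by move=> z; rewrite in_setU in_set1 in_set => /orP[/eqP->|]; [left|right].
have eyv : e y v by rewrite esym.
have exv : e x v by rewrite esym.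
have nW : nonsep e W.
  apply/andP; split.
    apply: (@hub_connected _ v) => z /Wcase [->|zq]; first exact: connect0.
    apply: (hub_path pe) => //; last by left.
    by apply/allP=> t /qW.
  apply/forallP=> w; apply/implyP=> /Wcase [->|wq].
    apply: (@hub_connected _ x) => z; rewrite in_setD1 => /andP[zv /Wcase[zv'|zq]].
      by rewrite zv' eqxx in zv.
    rewrite ir_connect_sym; apply: path_conn pe _ _ zq.
    by apply/allP=> t tq; change (t \in W :\ v); rewrite in_setD1 nv // qW.
  have wv := nv _ wq.
  apply: (@hub_connected _ v) => z.
  rewrite in_setD1 => /andP[zw /Wcase[->|zq]]; first exact: connect0.
  have vWw : v \in W :\ w by rewrite in_setD1 vW andbT eq_sym.
  move: wq; rewrite in_cons => /orP[/eqP wx|wq].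
    have [a [r qE]] : exists a r, q = a :: r by case: (q) qn => [//|a r] _; exists a, r.
    rewrite wx in zw; rewrite qE in pe yE uq zq.
    move: pe => /= /andP[_ par].
    move: zq; rewrite in_cons (negbTE zw) /= => zq.
    move: uq => /= /andP[xnq _].
    apply: (hub_path par) => //; last by right; move: yE => /= <-.
    apply/allP=> t tq; change (t \in W :\ w); rewrite in_setD1 wx (qW t); last by rewrite qE in_cons tq orbT.
    by rewrite andbT; apply: contraNneq xnq => tx; rewrite -tx.
  have [q1 [q2 qE]] := split_ex wq.
  rewrite qE in pe yE uq zq.
  move: uq; rewrite -cat_cons cat_uniq => /and3P[_ hs u2].
  move: pe; rewrite cat_path => /andP[p1 p2].
  have sub : forall t, t \in x :: q1 ++ w :: q2 -> t != w -> t \in W :\ w.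
    by move=> t tq tw; rewrite in_setD1 tw (qW t) // qE.
  clear qE.
  have wn1 : w \notin x :: q1 by apply: contra hs => wq1; apply/hasP; exists w => //; rewrite inE eqxx.
  move: u2 => /= /andP[wn2 _].
  move: zq; rewrite -cat_cons mem_cat => /orP[z1|z2].
    apply: (hub_path p1) => //; last by left.
    apply/allP=> t t1; apply: sub; first by rewrite -cat_cons mem_cat t1.
    by apply: contraNneq wn1 => tw; rewrite -tw.
  move: z2; rewrite inE (negbTE zw) /= => z2.
  case: q2 p2 yE wn2 sub z2 hs => [//|a r] p2 yE wn2 sub z2 _.
  move: p2 => /= /andP[_ /andP[_ par]].
  apply: (hub_path par) => //; last first.
    by right; move: yE; rewrite last_cat /= => <-.
  apply/allP=> t tr; apply: sub; first by rewrite -cat_cons mem_cat; apply/orP; right; rewrite in_cons tr orbT.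
  by apply: contraNneq wn2 => tw; rewrite -tw.
have W0 : W != set0 by apply/set0Pn; exists v.
case: (extend_block nW W0) => B Bb sWB; exists B => //.
have xB := subsetP sWB x (qW x (mem_head x q)).
have yB : y \in B by apply: (subsetP sWB); rewrite yE; apply: qW; apply: mem_last.
by rewrite (subsetP sWB v vW) xB yB.
Qed.

Lemma small_connected (U : {set T}) x y : e x y -> U \subset [set x; y] -> connectedb e U.
Proof.
move=> exy sU; apply: (@hub_connected _ (if x \in U then x else y)) => z zU.
have := subsetP sU z zU; rewrite !inE => /orP[/eqP zx|/eqP zy].
  by rewrite zx -zx zU; apply: connect0.
case: ifP => xU; last by rewrite zy; apply: connect0.
by rewrite zy in zU *; apply: ir_edge; rewrite // esym.
Qed.

Lemma edge_block x y : e x y -> exists2 B, B \in blocks e & (x \in B) && (y \in B).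
Proof.
move=> exy.
have nW : nonsep e [set x; y].
  apply/andP; split; first exact: small_connected exy (subxx _).
  apply/forallP=> v; apply/implyP=> _; apply: small_connected exy _; exact: subD1set.
have W0 : [set x; y] != set0 by apply/set0Pn; exists x; rewrite !inE eqxx.
case: (extend_block nW W0) => B Bb sWB; exists B => //.
by rewrite !(subsetP sWB) // !inE eqxx ?orbT.
Qed.

Section Dist.
Variable r : T.
Hypothesis conn : connectedb e setT.

Definition stp (A : {set T}) := A :|: [set y | [exists x in A, e x y]].
Definition lay k := iter k stp [set r].

Lemma lay_path a p k : a \in lay k -> path (ir setT) a p -> last a p \in lay (k + size p).
Proof.
elim: p a k => [|b p IH] a k /=; first by rewrite addn0.
move=> ak /andP[/and3P[eab _ _] pp]; rewrite addnS -addSn; apply: IH pp.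
rewrite /lay iterS in_setU; apply/orP; right; rewrite inE; apply/existsP; exists a.
by rewrite ak eab.
Qed.

Lemma lay_ex v : exists k, v \in lay k.
Proof.
have := connectedP conn (in_setT r) (in_setT v) => /connectP[p pp ->].
by exists (0 + size p); apply: lay_path pp; rewrite /lay /= inE.
Qed.

Definition d v := ex_minn (lay_ex v).

Lemma d_lay v : v \in lay (d v).
Proof. by rewrite /d; case: ex_minnP. Qed.

Lemma d_min v k : v \in lay k -> d v <= k.
Proof. by rewrite /d; case: ex_minnP => m _ H /H. Qed.

Lemma lay_mono k k' : k <= k' -> lay k \subset lay k'.
Proof.
move=> /subnK <-; elim: (k' - k) => [|n IH]; first exact: subxx.
by rewrite addSn /lay iterS; apply: subset_trans IH _; apply: subsetUl.
Qed.

Lemma d_edge u v : e u v -> d v <= (d u).+1.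
Proof.
move=> euv; apply: d_min; rewrite /lay iterS in_setU inE; apply/orP; right.
by apply/existsP; exists u; rewrite euv andbT; apply: d_lay.
Qed.

Lemma d_edge' u v : e u v -> d u <= (d v).+1.
Proof. by rewrite esym; apply: d_edge. Qed.

Lemma d_r : d r = 0.
Proof. by apply/eqP; rewrite -leqn0; apply: d_min; rewrite /lay /= inE. Qed.

Lemma d0 v : d v = 0 -> v = r.
Proof. by move=> H; have := d_lay v; rewrite H /lay /= inE => /eqP. Qed.

Lemma d_pred v : v != r -> exists2 u, e u v & (d u).+1 = d v.
Proof.
move=> vr; case dv: (d v) => [|k]; first by rewrite (d0 dv) eqxx in vr.
have := d_lay v; rewrite dv /lay iterS in_setU => /orP[vk|].
  by have := d_min vk; rewrite dv ltnn.
rewrite inE => /existsP[u /andP[uk euv]]; exists u => //.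
have := d_min uk; have := d_edge euv; rewrite dv ltnS => h1 h2.
by apply/eqP; rewrite eqSS eqn_leq h1 h2.
Qed.

Lemma low_conn k v : d v <= k -> connect (ir [set z | d z <= k]) v r.
Proof.
elim: {v}(d v) {-2}v (erefl (d v)) => [|n IH] v dv vk.
  by rewrite (d0 dv); apply: connect0.
have vr : v != r by apply/eqP => vE; move: dv; rewrite vE d_r.
case: (d_pred vr) => u euv du.
apply: (ctrans (y:=u)).
  apply: ir_edge; first by rewrite esym.
    by rewrite inE.
  by rewrite inE -ltnS du; apply: leqW.
apply: IH; first by apply: succn_inj; rewrite du dv.
by rewrite -ltnS du ltnW //.
Qed.

End Dist.

Section Closure.
Variable U : {set T}.
Local Notation f := (force_step e U).

Lemma fs_ext (X : {set T}) : X \subset f X.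
Proof. exact: subsetUl. Qed.

Lemma iter_ext (X : {set T}) k : X \subset iter k f X.
Proof. elim: k => [|k IH] /=; [exact: subxx | exact: subset_trans IH (fs_ext _)]. Qed.

Lemma iter_mono (X : {set T}) k k' : k <= k' -> iter k f X \subset iter k' f X.
Proof.
move=> /subnK <-; elim: (k' - k) => [|n IH]; first exact: subxx.
by rewrite addSn /=; apply: subset_trans IH (fs_ext _).
Qed.

Lemma iter_stable (X : {set T}) k j : f (iter k f X) = iter k f X -> iter (j + k) f X = iter k f X.
Proof. by move=> H; elim: j => [//|j IH]; rewrite addSn /= IH. Qed.

Lemma closure_fix (X : {set T}) : f (Defs.closure e U X) = Defs.closure e U X.
Proof.
rewrite /Defs.closure; set n := #|T|.
apply/eqP; apply/negPn/negP => Hn.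
have H : forall k, k <= n.+1 -> k <= #|iter k f X|.
  elim=> [//|k IH] Hk.
  have kn : k <= n by [].
  have nfix : f (iter k f X) != iter k f X.
    apply: contra Hn => /eqP fk.
    by rewrite -(subnK kn) (iter_stable _ fk) fk.
  have pr : iter k f X \proper f (iter k f X).
    by rewrite properEneq eq_sym nfix fs_ext.
  apply: leq_ltn_trans (IH (ltnW Hk)) _; exact: proper_card pr.
have := H n.+1 (leqnn _); rewrite ltnNge => /negP; apply; exact: max_card.
Qed.

Lemma closure_ext (X : {set T}) : X \subset Defs.closure e U X.
Proof. exact: iter_ext. Qed.
End Closure.

Section Lower.
Hypothesis cliq : forall B, B \in blocks e -> is_clique e B.

Lemma cliqE B x y : B \in blocks e -> x \in B -> y \in B -> x != y -> e x y.
Proof.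
move=> /cliq /forallP /(_ x) /implyP H xB yB xy.
by have := H xB => /forallP /(_ y) /implyP /(_ yB) /implyP /(_ xy).
Qed.

Definition full (X : {set T}) := [set B in blocks e | B \subset X].

Lemma step_count (X : {set T}) :
  #|force_step e setT X| + #|full X| <= #|X| + #|full (force_step e setT X)|.
Proof.
set X' := force_step e setT X.
have sXX : X \subset X' := fs_ext _ X.
set N := X' :\: X.
have cX' : #|X'| = #|X| + #|N|.
  by rewrite -(cardsID X X') (setIidPr sXX).
pose g w := odflt set0 [pick B in blocks e | (w \in B) && (B :\ w \subset X)].
have gP : forall w, w \in N -> [/\ g w \in blocks e, w \in g w & g w :\ w \subset X].
  move=> w; rewrite inE => /andP[wX wX'].
  move: wX'; rewrite /X' /force_step in_setU (negbTE wX) /= inE  in_setT /= => /existsP[u /andP[uX /eqP Hu]].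
  have euw : e u w.
    by have : w \in [set w] := set11 w; rewrite -Hu inE => /and3P[].
  rewrite /g; case: pickP => [B /andP[Bb /andP[wB sB]] | none] //=.
  case: (edge_block euw) => B Bb /andP[uB wB].
  have := none B; rewrite Bb wB /=; move/negP; case.
  apply/subsetP=> z; rewrite in_setD1 => /andP[zw zB].
  case: (eqVneq z u) => [->//|zu].
  apply/negPn/negP => zX.
  have euz : e u z by apply: (cliqE Bb uB zB); rewrite eq_sym.
  have : z \in [set w] by rewrite -Hu !inE euz zX.
  by rewrite inE (negbTE zw).
have ginj : {in N &, injective g}.
  move=> w1 w2 w1N w2N gE.
  have [_ _ s1] := gP _ w1N; have [_ w2g _] := gP _ w2N.
  move: w2N; rewrite inE => /andP[w2X _].
  apply/eqP; apply/negPn/negP => w12.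
  have : w2 \in g w1 :\ w1 by rewrite in_setD1 eq_sym w12 gE.
  by move/(subsetP s1); rewrite (negbTE w2X).
have sub : g @: N \subset full X' :\: full X.
  apply/subsetP=> B /imsetP[w wN ->]; have [gb wg sg] := gP _ wN.
  move: (wN); rewrite inE => /andP[wX wX'].
  move: gb; rewrite /full !inE => -> /=; apply/andP; split.
    by apply: contra wX => /subsetP; apply.
  apply/subsetP=> z zg; case: (eqVneq z w) => [->//|zw].
  by apply: (subsetP sXX); apply: (subsetP sg); rewrite in_setD1 zw.
have sF : full X \subset full X'.
  by apply/subsetP=> B; rewrite !inE => /andP[-> /subset_trans]; apply.
have := subset_leq_card sub; rewrite card_in_imset //.
rewrite -(cardsID (full X) (full X')) (setIidPr sF) cX'.
by move=> h; rewrite -addnA leq_add2l addnC leq_add2l.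
Qed.

Lemma lower (S : {set T}) : zero_forcing_set e setT S -> #|T| <= #|S| + #|blocks e|.
Proof.
move=> /andP[_ sT].
have H : forall k, #|iter k (force_step e setT) S| <= #|S| + #|full (iter k (force_step e setT) S)|.
  elim=> [|k IH] /=; first exact: leq_addr.
  have := step_count (iter k (force_step e setT) S) => h.
  rewrite -(leq_add2r #|full (iter k (force_step e setT) S)|); apply: leq_trans h _.
  by rewrite addnAC leq_add2r.
apply: leq_trans (_ : #|Defs.closure e setT S| <= _).
  by rewrite -cardsT; apply: subset_leq_card.
apply: leq_trans (H _) _; rewrite leq_add2l; apply: subset_leq_card.
by apply/subsetP=> B; rewrite inE => /andP[].
Qed.
End Lower.

Section Struct.
Variable r : T.
Hypothesis conn : connectedb e setT.
Hypothesis cliq : forall B, B \in blocks e -> is_clique e B.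
Local Notation d := (d r conn).

Lemma block_n0 B : B \in blocks e -> B != set0.
Proof. by rewrite inE => /and3P[]. Qed.

Definition p (B : {set T}) := odflt r [pick z in B | [forall y in B, d z <= d y]].

Lemma p_spec B : B != set0 -> p B \in B /\ forall y, y \in B -> d (p B) <= d y.
Proof.
move=> /set0Pn[x0 x0B]; rewrite /p; case: pickP => [z /andP[zB /forallP H]|none] /=.
  by split=> // y yB; have := H y; rewrite yB.
have [z zB zmin] := @arg_minnP _ x0 (fun z => z \in B) d x0B.
have := none z; rewrite zB /=; move/negP; case.
by apply/forallP=> y; apply/implyP; apply: zmin.
Qed.

Lemma low_sub k v : k < d v -> [set z | d z <= k] \subset ~: [set v].
Proof.
move=> kv; apply/subsetP=> z; rewrite !inE => zk; apply/eqP=> zv.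
by move: zk; rewrite zv leqNgt kv.
Qed.

Lemma min_uniq B x y : B \in blocks e -> x \in B -> (forall z, z \in B -> d x <= d z) ->
  y \in B -> d y = d x -> y = x.
Proof.
move=> Bb xB xmin yB dyx; apply/eqP/negPn/negP => yx.
have exy : e x y by apply: (cliqE cliq Bb xB yB); rewrite eq_sym.
have xr : x != r.
  apply/eqP=> xr; have : d y = 0 by rewrite dyx xr d_r.
  by move/d0 => yr; rewrite yr -xr eqxx in yx.
have yr : y != r.
  apply/eqP=> yr; have h : d x = 0 by rewrite -dyx yr d_r.
  by rewrite (d0 h) eqxx in xr.
have [x' ex'x dx'] := d_pred conn xr.
have [y' ey'y dy'] := d_pred conn yr.
set k := d x'.
have kx : k < d x by rewrite -dx'.
have sL := low_sub kx.
have c1 : connect (ir (~: [set x])) y x'.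
  apply: (ctrans (y:=y')).
    apply: ir_edge; first by rewrite esym.
      by rewrite !inE.
    by rewrite !inE; apply/eqP=> y'x; have := dy'; rewrite y'x dyx; lia.
  apply: (ctrans (y:=r)).
    apply: ir_mono sL _; apply: low_conn.
    by rewrite /k -ltnS dy' dyx -dx'.
  by rewrite ir_connect_sym; apply: ir_mono sL _; apply: low_conn.
have yx' : y != x' by apply/eqP=> yx'; have := dyx; rewrite yx' -dx'; lia.
have exx' : e x x' by rewrite esym.
have [D Db /and3P[xD yD x'D]] := cyc exy exx' yx' c1.
have xy : x != y by rewrite eq_sym.
have DB : D = B by exact: (block_inter Db Bb xy xD yD (subsetP (subxx _) _ xB) yB).
have := xmin x'; rewrite -DB x'D -dx' => /(_ isT); by rewrite ltnn.
Qed.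
Lemma pB B : B \in blocks e -> p B \in B.
Proof. by move/block_n0/p_spec => []. Qed.

Lemma pB_min B y : B \in blocks e -> y \in B -> d (p B) <= d y.
Proof. by move/block_n0/p_spec => [] _ H /H. Qed.

Lemma nonp_d B z : B \in blocks e -> z \in B -> z != p B -> d z = (d (p B)).+1.
Proof.
move=> Bb zB zp.
have h1 := pB_min Bb zB.
have h2 : d z != d (p B).
  apply: contra zp => /eqP h; apply/eqP.
  exact: (min_uniq Bb (pB Bb) (fun y => pB_min Bb) zB h).
have h3 : d z <= (d (p B)).+1.
  by apply: d_edge; apply: (cliqE cliq Bb (pB Bb) zB); rewrite eq_sym.
lia.
Qed.

Lemma two_parents B C v : B \in blocks e -> C \in blocks e -> v \in B -> v \in C ->
  v != p B -> v != p C -> B = C.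
Proof.
move=> Bb Cb vB vC vpB vpC.
have dB := nonp_d Bb vB vpB; have dC := nonp_d Cb vC vpC.
case: (eqVneq (p B) (p C)) => [pE|pn].
  by apply: (block_inter Bb Cb vpB vB (pB Bb) vC); rewrite pE pB.
have eva : e v (p B) by apply: (cliqE cliq Bb vB (pB Bb)).
have evc : e v (p C) by apply: (cliqE cliq Cb vC (pB Cb)).
set k := d (p B).
have kv : k < d v by rewrite dB.
have sL := low_sub kv.
have c1 : connect (ir (~: [set v])) (p B) (p C).
  apply: (ctrans (y:=r)); first by apply: ir_mono sL _; apply: low_conn.
  rewrite ir_connect_sym; apply: ir_mono sL _; apply: low_conn.
  by rewrite /k; have := dB; rewrite dC => [[->]].
have [D Db /and3P[vD aD cD]] := cyc eva evc pn c1.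
have DB : D = B by exact: (block_inter Db Bb vpB vD aD vB (pB Bb)).
have DC : D = C by exact: (block_inter Db Cb vpC vD cD vC (pB Cb)).
by rewrite -DB DC.
Qed.

Section Upper.
Hypothesis bigb : forall B, B \in blocks e -> 3 <= #|B|.

Definition w (B : {set T}) := odflt r [pick z in B | z != p B].
Definition u (B : {set T}) := odflt r [pick z in B | (z != p B) && (z != w B)].

Lemma w_spec B : B \in blocks e -> w B \in B /\ w B != p B.
Proof.
move=> Bb; rewrite /w; case: pickP => [z /andP[zB zp] //|none] /=.
have : B \subset [set p B].
  by apply/subsetP=> z zB; have := none z; rewrite zB /= inE => /negbFE.
by move/subset_leq_card; rewrite cards1 => /(leq_trans (bigb Bb)).
Qed.

Lemma u_spec B : B \in blocks e -> [/\ u B \in B, u B != p B & u B != w B].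
Proof.
move=> Bb; rewrite /u; case: pickP => [z /andP[zB /andP[zp zw]] //|none] /=.
have : B \subset [set p B; w B].
  apply/subsetP=> z zB; have := none z; rewrite zB /= !inE.
  by case: (z == p B); case: (z == w B).
move/subset_leq_card; rewrite cards2 => /(leq_trans (bigb Bb)).
by case: (p B != w B).
Qed.

Lemma upper : exists S, zero_forcing_set e setT S /\ #|S| + #|blocks e| = #|T|.
Proof.
set W := w @: blocks e.
have winj : {in blocks e &, injective w}.
  move=> B C Bb Cb wE; have [wB wpB] := w_spec Bb; have [wC wpC] := w_spec Cb.
  by apply: (two_parents Bb Cb wB) => //; rewrite ?wE.
exists (~: W); split; last first.
  by rewrite -(card_in_imset winj) addnC cardsC.
apply/andP; split; first exact: subsetT.
set X := Defs.closure e setT (~: W).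
have closed := closure_fix setT (~: W); rewrite -/X in closed.
have SX : ~: W \subset X := closure_ext setT (~: W).
have notX : forall y, y \notin X -> exists2 C, C \in blocks e & y = w C.
  move=> y yX; have : y \in W by apply: contraR yX => yW; apply: (subsetP SX); rewrite inE.
  by case/imsetP=> C Cb ->; exists C.
apply/subsetP=> z _; apply/negPn/negP => zX.
pose stuck B := (B \in blocks e) && (w B \notin X).
have [B0 B0b zE] := notX z zX.
have st0 : stuck B0 by rewrite /stuck B0b -zE.
have [B1 st1 B1min] := @arg_minnP _ B0 stuck (fun B => d (p B)) st0.
have pX1 : p B1 \in X.
  apply/negPn/negP=> pX; have [C Cb pE] := notX _ pX.
  move: (st1) => /andP[B1b _].
  have stC : stuck C by rewrite /stuck Cb -pE.
  have [wC wpC] := w_spec Cb.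
  by have := B1min C stC; rewrite pE (nonp_d Cb wC wpC) ltnn.
have P1 : stuck B1 && (p B1 \in X) by rewrite st1 pX1.
have [B /andP[/andP[Bb wX] pX] Bmax] := @arg_maxnP _ B1 (fun B => stuck B && (p B \in X)) (fun B => d (p B)) P1.
have [uB upB uwB] := u_spec Bb.
have [wB wpB] := w_spec Bb.
have uX : u B \in X.
  apply: (subsetP SX); rewrite inE; apply/imsetP => [[C Cb uE]].
  have [wC wpC] := w_spec Cb.
  have BC : B = C by apply: (two_parents Bb Cb uB) => //; rewrite uE.
  by rewrite uE BC eqxx in uwB.
have Hset : [set y in setT | e (u B) y & y \notin X] == [set w B].
  apply/eqP/setP=> y; rewrite !inE /=.
  case: (eqVneq y (w B)) => [->|ywB].
    by rewrite wX andbT; apply: (cliqE cliq Bb uB wB).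
  apply/negP=> /andP[euy yX].
  have [C Cb yE] := notX _ yX.
  have [wC wpC] := w_spec Cb.
  have [D Db /andP[uD yD]] := edge_block euy.
  case: (eqVneq D B) => [DB|DB].
    have ypB : y != p B by apply: contraNneq yX => ->.
    have BC : B = C by apply: (two_parents Bb Cb (_ : y \in B) _ ypB); rewrite -?DB // yE.
    by rewrite yE -BC eqxx in ywB.
  have upD : u B = p D.
    apply/eqP; apply/negPn/negP => upD.
    by have := two_parents Db Bb uD uB upD upB; move/eqP; rewrite (negbTE DB).
  have ypD : y != p D by rewrite -upD; apply/eqP=> yu; rewrite yu eirr in euy.
  have CD : C = D by apply: (two_parents Cb Db (_ : y \in C) yD _ ypD); rewrite yE.
  have stC : stuck C && (p C \in X) by rewrite /stuck Cb -yE yX CD -upD.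
  have := Bmax C stC; rewrite CD -upD (nonp_d Bb uB upB) => h.
  by have : (d (p B)).+1 <= d (p B) := h; rewrite ltnn.
have : w B \in X.
  rewrite -closed /force_step in_setU; apply/orP; right.
  by rewrite inE in_setT /=; apply/existsP; exists (u B); rewrite uX Hset.
by rewrite (negbTE wX).
Qed.
End Upper.

End Struct.

Lemma bigmin_seq (I : eqType) (s : seq I) (P : pred I) (F : I -> nat) x0 i :
  i \in s -> P i -> \big[minn/x0]_(j <- s | P j) F j <= F i.
Proof.
elim: s => [//|a s IH]; rewrite in_cons big_cons => /orP[/eqP->|iS] Pi.
  by rewrite Pi geq_minl.
case: (P a); last exact: IH.
by apply: leq_trans (geq_minr _ _) (IH iS Pi).
Qed.

Lemma bigmin_le (I : finType) (P : pred I) (F : I -> nat) x0 i :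
  P i -> \big[minn/x0]_(j | P j) F j <= F i.
Proof. by move=> Pi; apply: bigmin_seq => //; rewrite mem_index_enum. Qed.

Lemma bigmin_ge (I : finType) (P : pred I) (F : I -> nat) x0 m :
  m <= x0 -> (forall i, P i -> m <= F i) -> m <= \big[minn/x0]_(j | P j) F j.
Proof.
move=> h H; apply: (big_ind (fun x => m <= x)) => //.
by move=> a b ha hb; rewrite leq_min ha hb.
Qed.

Lemma Zf_clique (B : {set T}) : is_clique e B -> 2 <= #|B| -> Zf e B = #|B| - 1.
Proof.
move=> cB B2.
have cE : forall x y, x \in B -> y \in B -> x != y -> e x y.
  move: cB => /forallP H x y xB yB xy.
  by have := H x => /implyP /(_ xB) /forallP /(_ y) /implyP /(_ yB) /implyP /(_ xy).
apply/eqP; rewrite eqn_leq; apply/andP; split.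
  have [x0 x0B] : exists x0, x0 \in B by case/card_gt0P: (ltnW B2) => x0; exists x0.
  have -> : #|B| - 1 = #|B :\ x0| by rewrite (cardsD1 x0 B) x0B add1n subn1.
  apply: bigmin_le; apply/andP; split; first exact: subD1set.
  have [u0 uS] : exists u0, u0 \in B :\ x0.
    apply/card_gt0P; move: B2; rewrite (cardsD1 x0 B) x0B.
    by rewrite add1n ltnS.
  have sF : force_step e B (B :\ x0) \subset Defs.closure e B (B :\ x0).
    apply: (@iter_mono B (B :\ x0) 1); rewrite -cardsT.
    by apply: leq_trans (ltnW B2) (subset_leq_card (subsetT B)).
  apply/subsetP=> z zB; apply: (subsetP sF); rewrite /force_step in_setU.
  case: (eqVneq z x0) => [->|zx]; last by rewrite in_setD1 zx zB.
  apply/orP; right; rewrite inE x0B /=; apply/existsP; exists u0; rewrite uS /=.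
  move: uS; rewrite in_setD1 => /andP[ux uB].
  apply/eqP/setP=> y; rewrite !inE.
  case: (eqVneq y x0) => [->|yx] /=; first by rewrite x0B cE // eq_sym.
  by case: (y \in B); rewrite ?andbF.
apply: bigmin_ge; first exact: leq_subr.
move=> S /andP[sSB sBcl]; rewrite leqNgt; apply/negP => small.
have two : 1 < #|B :\: S|.
  rewrite cardsD (setIidPr sSB); move: small; lia.
have fixS : force_step e B S = S.
  apply/setP=> z; rewrite /force_step in_setU; case zS: (z \in S) => //=.
  rewrite inE; apply/negP=> /andP[_ /existsP[u /andP[uS /eqP Hu]]].
  case/card_gt1P: two => y1 [y2 [y1B y2B y12]].
  have inset : forall y, y \in B :\: S -> y \in [set z].
    move=> y; rewrite in_setD => /andP[yS yB]; rewrite -Hu !inE yB yS andbT /=.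
    apply: cE => //; first exact: (subsetP sSB).
    by apply: contraNneq yS => <-.
  move: (inset _ y1B) (inset _ y2B); rewrite !in_set1 => /eqP e1 /eqP e2.
  by rewrite e1 e2 eqxx in y12.
have : Defs.closure e B S = S by rewrite /Defs.closure -[#|T|]addn0 iter_stable.
move=> cl; rewrite cl in sBcl; have := subset_leq_card sBcl.
move: small; lia.
Qed.

Lemma double_count : \sum_(B in blocks e) #|B| = \sum_(v : T) block_index e v.
Proof.
under eq_bigr => B _ do rewrite -sum1_card.
rewrite (exchange_big_dep predT) //=; apply: eq_bigr => v _.
rewrite /block_index -sum1_card; apply: eq_bigl => B; by rewrite !inE.
Qed.

Lemma main_nat (ct : clique_tree e) (bigb : forall B, B \in blocks e -> 3 <= #|B|) :
  Zf e setT + #|blocks e| = #|T| /\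
  \sum_(B in blocks e) Zf e B + #|blocks e| = \sum_(v : T) block_index e v.
Proof.
case: ct => conn cliq; split.
  apply/eqP; rewrite eqn_leq; apply/andP; split.
    case: (pickP (fun _ : T => true)) => [r _ | none].
      have [S [zS cS]] := upper r conn cliq bigb.
      by rewrite -cS leq_add2r; apply: bigmin_le.
    have b0 : #|blocks e| = 0.
      apply/eqP; rewrite cards_eq0 -subset0; apply/subsetP=> B Bb.
      by have /set0Pn[z _] := block_n0 Bb; have := none z.
    have n0 : #|T| = 0 by apply/eqP; rewrite -leqn0 leqNgt; apply/negP => /card_gt0P [z _]; have := none z.
    rewrite b0 n0 addn0; rewrite -(cards0 T); apply: bigmin_le.
    rewrite /zero_forcing_set sub0set /=; apply/subsetP=> z; by have := none z.
  rewrite addnC -leq_subLR; apply: bigmin_ge; first by rewrite cardsT leq_subr.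
  by move=> S /(lower cliq); rewrite leq_subLR addnC.
rewrite -double_count -sum1_card -big_split /=; apply: eq_bigr => B Bb.
rewrite (Zf_clique (cliq B Bb)); last by apply: ltnW; apply: bigb.
by rewrite subn1 addn1 prednK // (leq_trans _ (bigb B Bb)).
Qed.

End S.

End Aux.

Local Open Scope ring_scope.

Theorem theorem2p6 (T : finType) (e : rel T)
  (esym : symmetric e) (eirr : irreflexive e)
  (ct : clique_tree e)
  (big_blocks : forall B, B \in blocks e -> (3 <= #|B|)%N) :
  (Zf e setT)%:Z =
    \sum_(B in blocks e) (Zf e B)%:Z
    - \sum_(v : T) ((block_index e v)%:Z - 1).
Proof.
have [h1 h2] := Aux.main_nat esym eirr ct big_blocks.
have E1 : \sum_(B in blocks e) (Zf e B)%:Z = (\sum_(B in blocks e) Zf e B)%:Z.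
  by rewrite (big_morph (fun n : nat => n%:Z) PoszD (erefl 0%:Z)).
have E2 : \sum_(v : T) ((block_index e v)%:Z - 1) = (\sum_v block_index e v)%:Z - #|T|%:Z.
  rewrite sumrB (big_morph (fun n : nat => n%:Z) PoszD (erefl 0%:Z)).
  congr (_ - _).
  rewrite -sum1_card (big_morph (fun n : nat => n%:Z) PoszD (erefl 0%:Z)).
  by apply: eq_bigl => i; rewrite inE.
rewrite E1 E2; move: h1 h2.
move: (Zf e setT) (#|blocks e|) (#|T|) (\sum_(B in blocks e) Zf e B) (\sum_v block_index e v).
move=> a b n c s h1 h2; lia.
Qed.
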